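(* A regular language is $\mathcal{R}$-trivial if and only if it is accepted by an rpoNFA.
   Context: An NFA is $\mathcal{A}=(Q,\Sigma,\cdot,I,F)$ with transition function $\cdot:Q\times\Sigma\to 2^Q$. State $q$ is reachable from $p$ ($p\le q$) if $q\in p\cdot w$ for some word $w$; a poNFA is an NFA for which $\le$ is a partial order. A restricted poNFA (rpoNFA) is a poNFA such that for every state $q$ and symbol $a$, if $q\in q\cdot a$ then $q\cdot a=\{q\}$. For words, $v=a_1\cdots a_n$ is a subsequence of $w$ ($v\preccurlyeq w$) if $w\in\Sigma^*a_1\Sigma^*\cdots\Sigma^*a_n\Sigma^*$; $\mathrm{sub}_k(v)=\{u\mid u\preccurlyeq v,\ |u|\le k\}$; $w_1\sim_k w_2$ iff $\mathrm{sub}_k(w_1)=\mathrm{sub}_k(w_2)$. For $k\ge0$, $x\sim^{\mathcal{R}}_k y$ iff for each prefix $u$ of $x$ there is a prefix $v$ of $y$ with $u\sim_k v$, and for each prefix $v$ of $y$ there is a prefix $u$ of $x$ with $u\sim_k v$. A regular language is $k$-$\mathcal{R}$-trivial if it is a union of $\sim^{\mathcal{R}}_k$-classes, and $\mathcal{R}$-trivial if it is $k$-$\mathcal{R}$-trivial for some $k\ge0$. *)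

(* Defs.v *)
From mathcomp Require Import all_boot.
Set Implicit Arguments. Unset Strict Implicit. Unset Printing Implicit Defensive.

Record nfa (Sigma : finType) := Nfa {
  nstate : finType;
  ntrans : nstate -> Sigma -> {set nstate};
  ninit  : {set nstate};
  nfin   : {set nstate} }.

Section NFA.
Variables (Sigma : finType) (N : nfa Sigma).
Local Notation Q := (nstate N).

Definition nreach (S : {set Q}) (w : seq Sigma) : {set Q} :=
  foldl (fun (S : {set Q}) (a : Sigma) => \bigcup_(p in S) @ntrans _ N p a) S w.

Definition ndelta (p : Q) (w : seq Sigma) : {set Q} := nreach [set p] w.

Definition naccepts (w : seq Sigma) : Prop := nreach (@ninit _ N) w :&: @nfin _ N != set0.

Definition nle (p q : Q) : Prop := exists w, q \in ndelta p w.

(* poNFA: reachability is a partial order (reflexivity and transitivity are automatic). *)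
Definition is_poNFA : Prop :=
  (forall p, nle p p) /\ (forall p q r, nle p q -> nle q r -> nle p r) /\
  (forall p q, nle p q -> nle q p -> p = q).

Definition is_rpoNFA : Prop :=
  is_poNFA /\ forall (q : Q) (a : Sigma), q \in @ntrans _ N q a -> @ntrans _ N q a = [set q].
End NFA.

Definition language (Sigma : finType) := seq Sigma -> Prop.

Definition accepts_lang (Sigma : finType) (N : nfa Sigma) (L : language Sigma) : Prop :=
  forall w, L w <-> naccepts N w.

Definition regular (Sigma : finType) (L : language Sigma) : Prop :=
  exists N : nfa Sigma, accepts_lang N L.

Definition sim_k (Sigma : finType) (k : nat) (w1 w2 : seq Sigma) : Prop :=
  forall u : seq Sigma, (subseq u w1 && (size u <= k)) = (subseq u w2 && (size u <= k)).

Definition simR_k (Sigma : finType) (k : nat) (x y : seq Sigma) : Prop :=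
  (forall u, prefix u x -> exists2 v, prefix v y & sim_k k u v) /\
  (forall v, prefix v y -> exists2 u, prefix u x & sim_k k u v).

Definition k_R_trivial (Sigma : finType) (k : nat) (L : language Sigma) : Prop :=
  forall x y, simR_k k x y -> (L x <-> L y).

Definition R_trivial (Sigma : finType) (L : language Sigma) : Prop :=
  exists k, k_R_trivial k L.

(* Main.v *)
Require Import Defs.
From mathcomp Require Import all_boot.
From Stdlib Require Import ClassicalEpsilon.
Set Implicit Arguments. Unset Strict Implicit. Unset Printing Implicit Defensive.

Definition pb (P : Prop) : bool := if excluded_middle_informative P then true else false.
Lemma pbP P : reflect P (pb P).
Proof. rewrite /pb; case: excluded_middle_informative => h; by constructor. Qed.

Section Gen.
Variable Sigma : finType.

Lemma nreach_cons (N : nfa Sigma) (S : {set nstate N}) a w :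
  nreach S (a :: w) = nreach (\bigcup_(p in S) @ntrans _ N p a) w.
Proof. by []. Qed.
Lemma nreach_rcons (N : nfa Sigma) (S : {set nstate N}) w a :
  nreach S (rcons w a) = \bigcup_(p in nreach S w) @ntrans _ N p a.
Proof. by rewrite /nreach foldl_rcons. Qed.
Lemma nreach_cat (N : nfa Sigma) (S : {set nstate N}) w1 w2 :
  nreach S (w1 ++ w2) = nreach (nreach S w1) w2.
Proof. by rewrite /nreach foldl_cat. Qed.
Lemma nreach_mono (N : nfa Sigma) (S S' : {set nstate N}) w :
  S \subset S' -> nreach S w \subset nreach S' w.
Proof.
elim: w S S' => [|a w IH] S S' H //. rewrite !nreach_cons; apply: IH.
apply/subsetP => r /bigcupP [p pS rp]. apply/bigcupP; exists p => //; exact: (subsetP H).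
Qed.
Lemma mem_nreach (N : nfa Sigma) (S : {set nstate N}) w r :
  r \in nreach S w -> exists2 p, p \in S & r \in nreach [set p] w.
Proof.
elim: w S r => [|a w IH] S r.
  by rewrite /nreach /= => rS; exists r; rewrite ?set11.
rewrite nreach_cons => /IH [p' /bigcupP [p pS p'p] rp']. exists p => //.
rewrite nreach_cons. apply: (subsetP (nreach_mono w _)) rp'.
apply/subsetP => x; rewrite inE => /eqP ->. apply/bigcupP; exists p => //; by rewrite inE.
Qed.
Lemma nle_trans_gen (N : nfa Sigma) (p q r : nstate N) : nle p q -> nle q r -> nle p r.
Proof.
move=> [w1 H1] [w2 H2]; exists (w1 ++ w2). rewrite /ndelta nreach_cat.
apply: (subsetP (nreach_mono w2 _)) H2. by rewrite sub1set.
Qed.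

Lemma decomp (P : pred Sigma) x :
  all P x \/ exists u b x', [/\ x = u ++ b :: x', all P u & ~~ P b].
Proof.
elim: x => [|c x IH]; first by left.
case Pc: (P c).
  case: IH => [H|[u [b [x' [-> Hu Hb]]]]]; first by left; rewrite /= Pc.
  by right; exists (c :: u), b, x'; rewrite /= Pc.
by right; exists [::], c, x; rewrite Pc.
Qed.

Lemma simk_sym k (u v : seq Sigma) : sim_k k u v -> sim_k k v u.
Proof. by move=> H s; rewrite H. Qed.
Lemma simR_sym k (x y : seq Sigma) : simR_k k x y -> simR_k k y x.
Proof.
move=> [H1 H2]; split.
  by move=> u pu; have [v pv s] := H2 u pu; exists v => //; apply: simk_sym.
by move=> u pu; have [v pv s] := H1 u pu; exists v => //; apply: simk_sym.
Qed.

Lemma simk_mem k (u v : seq Sigma) a : 0 < k -> sim_k k u v -> (a \in u) = (a \in v).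
Proof. by move=> k0 H; have := H [:: a]; rewrite !sub1seq /= k0 !andbT. Qed.

Lemma simR_mem k (x y : seq Sigma) a : 0 < k -> simR_k k x y -> (a \in x) = (a \in y).
Proof.
move=> k0 [H1 H2]; apply/idP/idP => Ha.
  have [v pv s] := H1 x (prefix_refl x). rewrite (simk_mem a k0 s) in Ha.
  by case/prefixP: pv => t ->; rewrite mem_cat Ha.
have [v pv s] := H2 y (prefix_refl y). rewrite -(simk_mem a k0 s) in Ha.
by case/prefixP: pv => t ->; rewrite mem_cat Ha.
Qed.

Lemma subseq_skip (b : Sigma) u p s :
  b \notin u -> subseq (b :: s) (u ++ b :: p) = subseq s p.
Proof.
elim: u => [|c u IH] /=; first by rewrite eqxx.
rewrite inE negb_or => /andP [bc bu]. rewrite (negbTE bc). exact: IH.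
Qed.

Lemma prefix_cat_cases (z v w : seq Sigma) :
  prefix z (v ++ w) -> prefix z v \/ exists2 r, prefix r w & z = v ++ r.
Proof.
elim: v z => [|c v IH] z H; first by right; exists z.
case: z H => [|d z] /=; first by left.
move=> /andP [/eqP -> H]. case: (IH z H) => [H'|[r pr ->]].
  by left; rewrite /= eqxx H'.
by right; exists r.
Qed.

Lemma prefix_split (b : Sigma) z v y' :
  prefix z (v ++ b :: y') -> b \in z -> b \notin v ->
  exists2 r, prefix r y' & z = v ++ b :: r.
Proof.
move=> /prefix_cat_cases [H|[r pr ->]] bz bv.
  by case/prefixP: H bz => t Et bz; move: bv; rewrite Et mem_cat bz.
case: r pr bz => [|d r] /=.
  by rewrite cats0 (negbTE bv).
by move=> /andP [/eqP -> pr] _; exists r.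
Qed.

Lemma cancel_half k (u v : seq Sigma) (b : Sigma) x' y' : b \notin u -> b \notin v ->
  (forall p, prefix p (u ++ b :: x') -> exists2 z, prefix z (v ++ b :: y') & sim_k k.+1 p z) ->
  forall p', prefix p' x' -> exists2 r, prefix r y' & sim_k k p' r.
Proof.
move=> bu bv H p' pp'.
have [z pz s] : exists2 z, prefix z (v ++ b :: y') & sim_k k.+1 (u ++ b :: p') z.
  apply: H. case/prefixP: pp' => t ->; apply/prefixP; exists t; by rewrite -catA.
have bz : b \in z by rewrite -(simk_mem b _ s) // mem_cat inE eqxx orbT.
have [r pr Ez] := prefix_split pz bz bv. exists r => // s0.
case: (leqP (size s0) k) => hs; last by rewrite !andbF.
rewrite !andbT. have := s (b :: s0). rewrite /= ltnS hs !andbT Ez !subseq_skip //.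
Qed.

Lemma cancel_simR k (u v : seq Sigma) b x' y' : b \notin u -> b \notin v ->
  simR_k k.+1 (u ++ b :: x') (v ++ b :: y') -> simR_k k x' y'.
Proof.
move=> bu bv [H1 H2]; split; first exact: cancel_half H1.
move=> q pq.
have H2' : forall p, prefix p (v ++ b :: y') ->
    exists2 z, prefix z (u ++ b :: x') & sim_k k.+1 p z.
  by move=> p pp; have [z pz s] := H2 p pp; exists z => //; apply: simk_sym.
have [r pr s] := cancel_half bv bu H2' pq. by exists r => //; apply: simk_sym.
Qed.

Lemma simk_rcons k (w w' : seq Sigma) a : sim_k k w w' -> sim_k k (rcons w a) (rcons w' a).
Proof.
move=> H s. case: (leqP (size s) k) => hs; last by rewrite !andbF.
rewrite !andbT.
have Hr : forall u, size u <= k -> subseq u (rev w) = subseq u (rev w').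
  move=> u hu; rewrite -(subseq_rev u) -[in RHS](subseq_rev u) !revK.
  by have := H (rev u); rewrite size_rev hu !andbT.
rewrite -!(subseq_rev s) !rev_rcons.
move: hs; rewrite -size_rev.
case: (rev s) => [|c t] //= hs.
case: (c == a); apply: Hr => //. exact: ltnW.
Qed.

End Gen.

Section Dir2.
Variables (Sigma : finType) (N : nfa Sigma).
Hypothesis HN : is_rpoNFA N.
Local Notation Q := (nstate N).

Definition loops (q : Q) (a : Sigma) : bool := q \in ntrans q a.
Definition up (q : Q) : {set Q} := [set r | pb (nle q r)].
Definition Acc (q : Q) w := nreach [set q] w :&: nfin N != set0.

Lemma reach_loops q u : all (loops q) u -> nreach [set q] u = [set q].
Proof.
have [_ Hr] := HN.
elim: u => [|a u IH] // /andP [Ha Hu]. rewrite nreach_cons big_set1.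
by rewrite (Hr q a Ha); exact: IH.
Qed.

Lemma match_y k q u b x' y : all (loops q) u -> ~~ loops q b ->
  simR_k k.+1 (u ++ b :: x') y ->
  exists v y', [/\ y = v ++ b :: y', all (loops q) v & simR_k k x' y'].
Proof.
move=> Hu Hb Hs.
have nP : forall s, all (loops q) s -> forall c, ~~ loops q c -> c \notin s.
  by move=> s Hs0 c Hc; apply/negP => cs; move: Hc; rewrite (allP Hs0 c cs).
case: (decomp (loops q) y) => [Hy | [v [c [y' [Ey Hv Hc]]]]].
  have : b \in y by rewrite -(simR_mem b _ Hs) // mem_cat inE eqxx orbT.
  by move=> /(allP Hy); rewrite (negbTE Hb).
have [z pz s] := Hs.1 (u ++ [:: b]) (ltac:(apply/prefixP; exists x'; by rewrite -catA)).
have bz : b \in z by rewrite -(simk_mem b _ s) // mem_cat inE eqxx orbT.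
have cb : c = b.
  move: pz; rewrite Ey => /prefix_cat_cases [H|[r pr Ez]].
    by case/prefixP: H bz => t Et bz; have := nP _ Hv _ Hb; rewrite Et mem_cat bz.
  case: r pr Ez => [|d r] /=.
    by move=> _ Ez; move: bz; rewrite Ez cats0 (negbTE (nP _ Hv _ Hb)).
  move=> /andP [/eqP -> _] Ez.
  have : c \in z by rewrite Ez mem_cat inE eqxx orbT.
  rewrite -(simk_mem c _ s) // mem_cat inE (negbTE (nP _ Hu _ Hc)) /=.
  by move/eqP.
subst c y. exists v, y'; split => //.
exact: cancel_simR (nP _ Hu _ Hb) (nP _ Hv _ Hb) Hs.
Qed.

Lemma main k : forall q, #|up q| <= k -> forall x y, simR_k k x y -> Acc q x -> Acc q y.
Proof.
have [[Hrefl [Htrans Hanti]] Hr] := HN.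
elim: k => [|k IH] q Hk x y Hs Hx.
  have : 0 < #|up q| by apply/card_gt0P; exists q; rewrite inE; apply/pbP.
  by rewrite leqn0 in Hk; rewrite (eqP Hk).
case: (decomp (loops q) x) => [Hl | [u [b [x' [Ex Hu Hb]]]]].
  move: Hx; rewrite /Acc reach_loops // => Hx.
  have Hly : all (loops q) y.
    by apply/allP => a ay; rewrite -(simR_mem a _ Hs) // in ay; apply: (allP Hl).
  by rewrite reach_loops.
subst x. have [v [y' [Ey Hv Hs']]] := match_y Hu Hb Hs. subst y.
move: Hx. rewrite /Acc nreach_cat reach_loops // nreach_cons big_set1.
case/set0Pn => r /setIP [rin rF]. have [q' q'b rq'] := mem_nreach rin.
have Hq' : #|up q'| <= k.
  have : up q' \proper up q.
    apply/properP; split.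
      apply/subsetP => s; rewrite !inE => /pbP Hs0; apply/pbP; apply: (Htrans q q' s) => //.
      by exists [:: b]; rewrite /ndelta nreach_cons big_set1.
    exists q; first by rewrite inE; apply/pbP.
    rewrite inE; apply/negP => /pbP Hq'q.
    have Eq := Hanti q q' (ltac:(by exists [:: b]; rewrite /ndelta nreach_cons big_set1)) Hq'q.
    by subst q'; move: Hb; rewrite /loops q'b.
  move/proper_card => H; rewrite -ltnS; exact: leq_trans H Hk.
have : Acc q' x' by apply/set0Pn; exists r; rewrite inE rq' rF.
move/(IH q' Hq' x' y' Hs') => /set0Pn [r' /setIP [r'in r'F]].
rewrite nreach_cat reach_loops // nreach_cons big_set1.
apply/set0Pn; exists r'; rewrite inE r'F andbT.
apply: (subsetP (nreach_mono y' _)) r'in. by rewrite sub1set.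
Qed.

Lemma rpo_Rtriv L : accepts_lang N L -> k_R_trivial #|Q| L.
Proof.
move=> HL.
suff H : forall x y, simR_k #|Q| x y -> naccepts N x -> naccepts N y.
  move=> x y Hs; rewrite !HL; split; first exact: H.
  by apply: H; apply: simR_sym.
move=> x y Hs; rewrite /naccepts => /set0Pn [r /setIP [rin rF]].
have [q qI rq] := mem_nreach rin.
have : Acc q x by apply/set0Pn; exists r; rewrite inE rq rF.
move/(main (max_card (up q)) Hs) => /set0Pn [r' /setIP [r'in r'F]].
apply/set0Pn; exists r'; rewrite inE r'F andbT.
apply: (subsetP (nreach_mono y _)) r'in. by rewrite sub1set.
Qed.

End Dir2.

Section Dir1.
Variables (Sigma : finType) (k : nat).

Fixpoint bw n : seq (seq Sigma) :=
  if n is n'.+1 then [::] :: [seq a :: s | a <- enum Sigma, s <- bw n'] else [:: [::]].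

Lemma mem_bw n s : (s \in bw n) = (size s <= n).
Proof.
elim: n s => [|n IH] [|a s] //.
rewrite /= in_cons /=. apply/allpairsP/idP => [[[c t] [_ ht /= [_ ->]]] | hs].
  by rewrite ltnS -IH.
by exists (a, s); rewrite mem_enum IH -ltnS.
Qed.

Definition W := seq_sub (bw k).

Definition Sk (u : seq Sigma) : {set W} := [set x : W | subseq (val x) u].

Lemma Sk_sim u v : Sk u = Sk v -> sim_k k u v.
Proof.
move=> E s. case: (leqP (size s) k) => hs; last by rewrite !andbF.
rewrite !andbT.
have sw : s \in bw k by rewrite mem_bw.
have : ((@SeqSub _ (bw k) s sw : W) \in Sk u) = ((@SeqSub _ (bw k) s sw : W) \in Sk v).
  by rewrite E.
by rewrite !inE.
Qed.

Lemma sim_Sk u v : sim_k k u v -> Sk u = Sk v.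
Proof.
move=> H; apply/setP => x; rewrite !inE.
have hsz : size (val x) <= k by rewrite -mem_bw; exact: (valP x).
by have := H (val x); rewrite hsz !andbT.
Qed.

Lemma Sk_sub u w : prefix u w -> Sk u \subset Sk w.
Proof.
move=> pu; apply/subsetP => x; rewrite !inE => H; case/prefixP: pu => t Et.
by rewrite Et; exact: subseq_trans H (prefix_subseq u t).
Qed.

Definition st (w : seq Sigma) : {set {set W}} := [set Sk (take i w) | i : 'I_(size w).+1].

Lemma mem_st S w : (S \in st w) <-> exists2 u, prefix u w & S = Sk u.
Proof.
split.
  by case/imsetP => i _ ->; exists (take i w) => //; exact: prefix_take.
move=> [u pu ->]. apply/imsetP.
have hs : size u < (size w).+1 by rewrite ltnS; exact: size_prefix.
exists (Ordinal hs) => //=.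
have E : take (size u) w = u by apply/eqP; rewrite -prefixE.
by rewrite E.
Qed.

Lemma st_max w : Sk w \in st w.
Proof. by apply/mem_st; exists w => //; exact: prefix_refl. Qed.

Lemma st_sub w S : S \in st w -> S \subset Sk w.
Proof. by case/mem_st => u pu ->; exact: Sk_sub. Qed.

Lemma st_Sk w w' : st w = st w' -> Sk w = Sk w'.
Proof.
move=> E; apply/eqP; rewrite eqEsubset; apply/andP; split.
  by apply: st_sub; rewrite -E; exact: st_max.
by apply: st_sub; rewrite E; exact: st_max.
Qed.

Lemma st_rcons w a : st (rcons w a) = Sk (rcons w a) |: st w.
Proof.
apply/setP => S; rewrite in_setU1; apply/idP/idP.
  move/mem_st => [u pu ->].
  move: pu; rewrite -cats1 => /prefix_cat_cases [H|[r pr Eu]].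
    by apply/orP; right; apply/mem_st; exists u.
  move: pr; rewrite prefixs1 => /orP [/eqP Er|/eqP Er]; subst r.
    by apply/orP; right; apply/mem_st; exists u => //; rewrite Eu cats0 prefix_refl.
  by rewrite Eu eqxx.
case/orP => [/eqP -> | /mem_st [u pu ->]]; apply/mem_st.
  by exists (rcons w a) => //; exact: prefix_refl.
by exists u => //; exact: prefix_trans pu (prefix_rcons w a).
Qed.

Lemma st_cong w w' a : st w = st w' -> st (rcons w a) = st (rcons w' a).
Proof.
move=> E. rewrite !st_rcons E. congr (_ |: _).
by apply: sim_Sk; apply: simk_rcons; apply: Sk_sim; exact: st_Sk.
Qed.

Lemma st_mono w a : st w \subset st (rcons w a).
Proof. by rewrite st_rcons subsetU1. Qed.

Lemma st_simR w w' : st w = st w' -> simR_k k w w'.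
Proof.
move=> E; split => u pu.
  have : Sk u \in st w' by rewrite -E; apply/mem_st; exists u.
  by case/mem_st => v pv Ev; exists v => //; exact: Sk_sim.
have : Sk u \in st w by rewrite E; apply/mem_st; exists u.
by case/mem_st => v pv Ev; exists v => //; apply: Sk_sim; rewrite Ev.
Qed.

Variable L : language Sigma.

Definition A1 : nfa Sigma :=
  @Nfa Sigma {set {set W}}
    (fun q a => [set q' | pb (exists w, st w = q /\ st (rcons w a) = q')])
    [set st [::]]
    [set q | pb (exists w, st w = q /\ L w)].

Lemma trans_st w a : @ntrans _ A1 (st w) a = [set st (rcons w a)].
Proof.
apply/setP => q'; rewrite !inE.
apply/pbP/eqP => [[w' [E <-]] | ->]; last by exists w.
by apply: st_cong.
Qed.

Lemma reach_st w : nreach (@ninit _ A1) w = [set st w].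
Proof.
elim/last_ind: w => [|w a IH] //.
by rewrite nreach_rcons IH big_set1 trans_st.
Qed.

Lemma A1_ge (p q : nstate A1) w : q \in ndelta p w -> p \subset q.
Proof.
rewrite /ndelta.
elim/last_ind: w q => [|w a IH] q.
  by rewrite /nreach /= inE => /eqP ->.
rewrite nreach_rcons => /bigcupP [p' p'in qin]. have := IH _ p'in.
move: qin; rewrite /= inE => /pbP [w' [<- <-]] H.
exact: subset_trans H (st_mono w' a).
Qed.

Lemma A1_rpo : is_rpoNFA A1.
Proof.
split; first split.
- by move=> p; exists [::]; rewrite /ndelta /nreach /= set11.
- split; first exact: nle_trans_gen.
  move=> p q [w1 H1] [w2 H2]; apply/eqP; rewrite eqEsubset (A1_ge H1) (A1_ge H2).
  done.
- move=> q a. rewrite /= inE => /pbP [w [Eq Eq']].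
  have := trans_st w a. rewrite Eq /= => ->. by rewrite -Eq Eq' Eq.
Qed.

Lemma A1_acc : k_R_trivial k L -> accepts_lang A1 L.
Proof.
move=> HL w; rewrite /naccepts reach_st; split.
  by move=> Lw; apply/set0Pn; exists (st w); rewrite inE set11 inE; apply/pbP; exists w.
case/set0Pn => q /setIP [/set1P -> ]; rewrite inE => /pbP [w' [E Lw']].
exact: (proj1 (HL w' w (st_simR E))).
Qed.

End Dir1.

Theorem theorem3 (Sigma : finType) (L : language Sigma) :
  regular L ->
  (R_trivial L <-> exists N : nfa Sigma, is_rpoNFA N /\ accepts_lang N L).
Proof.
move=> _; split.
  case=> k Hk. exists (A1 k L); split; [exact: A1_rpo | exact: A1_acc].
case=> N [HN HL]. exists #|nstate N|. exact: rpo_Rtriv.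
Qed.
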